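(* Let $G$ be a connected graph with $\omega(G)\in\{n(G)-1,\,n(G)-2,\,n(G)-3\}$ and $n(G)\ge \omega(G)+1\ge 4$. Then $$\dim_l(G)\le \left(\frac{\omega(G)-2}{\omega(G)-1}\right) n(G).$$
   Context: All graphs are finite and simple. $n(G)$ is the number of vertices and $\omega(G)$ the clique number of $G$. For vertices $x,y$ of a connected graph $G$, $d_G(x,y)$ is the length of a shortest $x,y$-path. A vertex $w$ distinguishes vertices $u,v$ if $d_G(u,w)\neq d_G(v,w)$. A set $W\subseteq V(G)$ is a local resolving set of $G$ if for every pair of adjacent vertices $u,v\in V(G)\setminus W$ some vertex of $W$ distinguishes $u$ and $v$. The local metric dimension $\dim_l(G)$ is the minimum cardinality of a local resolving set of $G$. *)

(* Defs.v *)
From mathcomp Require Import all_boot all_order all_algebra.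
Set Implicit Arguments. Unset Strict Implicit. Unset Printing Implicit Defensive.

Definition simple_graph (T : finType) (e : rel T) : Prop :=
  symmetric e /\ irreflexive e.

Definition connected_graph (T : finType) (e : rel T) : Prop :=
  forall x y : T, connect e x y.

Fixpoint ball (T : finType) (e : rel T) (k : nat) (x : T) : {set T} :=
  match k with
  | 0 => [set x]
  | k'.+1 => ball e k' x :|: [set y | [exists z in ball e k' x, e z y]]
  end.

(* shortest-path distance: least k with y within k steps of x; in a connected
   graph on #|T| vertices this k is < #|T|, so searching iota 0 #|T| suffices. *)
Definition dist (T : finType) (e : rel T) (x y : T) : nat :=
  find (fun k => y \in ball e k x) (iota 0 #|T|).

Definition is_clique (T : finType) (e : rel T) (K : {set T}) : bool :=
  [forall x in K, forall y in K, (x != y) ==> e x y].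

Definition omega (T : finType) (e : rel T) : nat :=
  \max_(K : {set T} | is_clique e K) #|K|.

Definition distinguishes (T : finType) (e : rel T) (w u v : T) : bool :=
  dist e u w != dist e v w.

Definition local_resolving (T : finType) (e : rel T) (W : {set T}) : bool :=
  [forall u, forall v,
     [&& u \notin W, v \notin W & e u v] ==>
     [exists w in W, distinguishes e w u v]].

Definition local_metric_dim (T : finType) (e : rel T) : nat :=
  \big[minn/#|T|]_(W : {set T} | local_resolving e W) #|W|.

(* Main.v *)
Require Import Defs.
From mathcomp Require Import all_boot all_order all_algebra.
From mathcomp Require Import zify.
Import Order.TTheory GRing.Theory Num.Theory.

Section S.
Variables (T : finType) (e : rel T).

Lemma dist1 x y : 1 < #|T| -> x != y -> (dist e x y == 1) = e x y.
Proof.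
move=> hT xy; rewrite /dist.
move: hT; case: #|T| => [|[|n]] // _ /=.
rewrite !inE (eq_sym y) (negbTE xy) /=.
have -> : [exists z in [set x], e z y] = e x y.
  apply/existsP/idP => [[z /andP[]]|exy]; first by rewrite in_set1 => /eqP ->.
  by exists x; rewrite in_set1 eqxx.
by case: (e x y).
Qed.

Lemma cut_edge (C : pred T) a b : connect e a b -> C a -> ~~ C b ->
  exists x z, [/\ C x, ~~ C z & e x z].
Proof.
move/connectP=> [p]; elim: p a => [|y p IH] a /=; first by move=> _ -> ->.
case/andP=> eay py lb Ca Cb.
case Cy: (C y); first exact: (IH y py lb Cy Cb).
by exists a, y; rewrite Cy.
Qed.

Lemma clique_le K : is_clique e K -> #|K| <= omega e.
Proof. by move=> h; rewrite /omega; apply: leq_bigmax_cond. Qed.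

Lemma nonclique K : ~~ is_clique e K ->
  exists x y, [/\ x \in K, y \in K, x != y & ~~ e x y].
Proof.
move/forallPn=> [x]; rewrite negb_imply => /andP[xK /forallPn[y]].
rewrite negb_imply => /andP[yK]; rewrite negb_imply => /andP[xy nxy].
by exists x, y.
Qed.

Lemma dim_le W : local_resolving e W -> local_metric_dim e <= #|W|.
Proof.
move=> h; rewrite /local_metric_dim.
have: W \in index_enum {set T} by rewrite mem_index_enum.
elim: (index_enum _) => [|x r IH] //; rewrite inE big_cons.
case/orP=> [/eqP <-|Wr]; first by rewrite h geq_minl.
case: (local_resolving e x) => //; last exact: IH.
exact: leq_trans (geq_minr _ _) (IH Wr).
Qed.


Definition okp u v s :=
  e u v ==> [exists w, [&& w != u, w != v, w != s & e u w != e v w]].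
Definition good x y z :=
  [&& x != y, x != z, y != z, okp x y z, okp x z y & okp y z x].

Lemma good_res x y z : simple_graph e -> 1 < #|T| -> good x y z ->
  local_resolving e (~: [set x; y; z]).
Proof.
move=> [sym irr] hT /andP[xy /and5P[xz yz oxy oxz oyz]].
have key : forall u v s, okp u v s -> e u v ->
  (forall w, w != u -> w != v -> w != s -> w \in ~: [set x; y; z]) ->
  [exists w in ~: [set x; y; z], distinguishes e w u v] &&
  [exists w in ~: [set x; y; z], distinguishes e w v u].
  move=> u v s /implyP o euv hw; case/existsP: (o euv) => w /and4P[wu wv ws d].
  have dd : dist e u w != dist e v w.
    apply: contra d => /eqP E.
    have h1 := dist1 u w hT; have h2 := dist1 v w hT.
    by rewrite -h1 ?(eq_sym u) // -h2 ?(eq_sym v) // E.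
  by apply/andP; split; apply/existsP; exists w;
    rewrite hw // /distinguishes ?dd // eq_sym dd.
have hw3 : forall w, w != x -> w != y -> w != z -> w \in ~: [set x; y; z].
  by move=> w h1 h2 h3; rewrite !inE (negbTE h1) (negbTE h2) (negbTE h3).
apply/forallP=> u; apply/forallP=> v; apply/implyP=> /and3P[].
rewrite !inE !negbK => hu hv euv.
move: hu hv euv; case/orP=> [/orP[]|] /eqP ->; case/orP=> [/orP[]|] /eqP -> euv;
  rewrite ?irr // in euv.
- by case/andP: (key x y z oxy euv ltac:(by move=> w ? ? ?; apply: hw3)).
- by case/andP: (key x z y oxz euv ltac:(by move=> w ? ? ?; apply: hw3)).
- by case/andP: (key x y z oxy ltac:(by rewrite sym) ltac:(by move=> w ? ? ?; apply: hw3)).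
- by case/andP: (key y z x oyz euv ltac:(by move=> w ? ? ?; apply: hw3)).
- by case/andP: (key x z y oxz ltac:(by rewrite sym) ltac:(by move=> w ? ? ?; apply: hw3)).
- by case/andP: (key y z x oyz ltac:(by rewrite sym) ltac:(by move=> w ? ? ?; apply: hw3)).
Qed.


Lemma ng x y z : x != y -> x != z -> y != z -> ~~ e x y -> ~~ e x z ->
  ~~ good x y z ->
  e y z /\ (forall w, w != x -> w != y -> w != z -> e y w = e z w).
Proof.
move=> xy xz yz nxy nxz; rewrite /good xy xz yz /okp (negbTE nxy) (negbTE nxz) /=.
rewrite negb_imply => /andP[eyz /existsPn nw]; split=> // w wx wy wz.
by move: (nw w); rewrite wy wz wx /= negbK => /eqP.
Qed.

Lemma exists_good : simple_graph e -> connected_graph e ->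
  1 < #|T| -> omega e <= #|T| - 2 -> exists x y z, good x y z.
Proof.
move=> [sym irr] conn hT hw.
have [g|nH] := boolP [exists x, exists y, exists z, good x y z].
  by case/existsP: g => x /existsP [y /existsP [z g]]; exists x, y, z.
exfalso.
have H : forall x y z, ~~ good x y z.
  by move=> x y z; apply: contra nH => g; apply/existsP; exists x;
  apply/existsP; exists y; apply/existsP; exists z.
have ne_irr : forall u v, e u v -> u != v.
  by move=> u v euv; apply: contraTneq euv => ->; rewrite irr.
have step3 : forall a b c d, a != b -> ~~ e a b -> c != a -> c != b ->
    ~~ e a c -> d != a -> d != b -> ~~ e b d -> False.
  move=> a b c d ab nab ca cb nac da db nbd.
  have ac : a != c by rewrite eq_sym.
  have bc : b != c by rewrite eq_sym.
  have ad : a != d by rewrite eq_sym.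
  have bd : b != d by rewrite eq_sym.
  have [ebc tw1] := ng a b c ab ac bc nab nac (H a b c).
  have [ead tw2] := ng b a d (ltac:(by rewrite eq_sym)) bd ad (ltac:(by rewrite sym)) nbd (H b a d).
  have [y [eay eby]] : exists y, e a y /\ e b y.
    have [||x [z [Cx nCz exz]]] := cut_edge (fun v => (v == a) || e a v) a b (conn a b).
    - by rewrite eqxx.
    - by rewrite /= eq_sym (negbTE ab) (negbTE nab).
    move: Cx nCz => /= Cx; rewrite negb_or => /andP[za nez].
    have eax : e a x.
      case/orP: Cx => // /eqP xa; by rewrite -xa exz in nez.
    have xa : x != a by rewrite eq_sym ne_irr.
    have xb : x != b by apply: contraNneq nab => <-.
    have xz : x != z by rewrite ne_irr.
    have [/eqP zb|zb] := boolP (z == b).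
      by exists x; split=> //; rewrite sym -zb.
    have [ebz twz] := ng a b z ab (ltac:(by rewrite eq_sym)) (ltac:(by rewrite eq_sym)) nab nez (H a b z).
    by exists x; split=> //; rewrite twz // sym.
  have ya : y != a by rewrite eq_sym ne_irr.
  have yb : y != b by rewrite eq_sym ne_irr.
  have yc : y != c by apply: contraNneq nac => <-.
  have yd : y != d by apply: contraNneq nbd => <-.
  apply: (negP (H a b y)).
  rewrite /good ab (eq_sym a y) ya (eq_sym b y) yb /okp (negbTE nab) eay eby /=.
  apply/andP; split; apply/existsP.
  - exists c; rewrite ca (eq_sym c y) yc cb (negbTE nac) /=.
    by rewrite (sym y c) -tw1 ?eby.
  - exists d; rewrite db (eq_sym d y) yd da (negbTE nbd) /=.
    by rewrite (sym y d) -tw2 ?eay.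
have step2 : forall a b c d, a != b -> a != c -> a != d -> b != c -> b != d ->
    c != d -> ~~ e a b -> ~~ e c d -> False.
  move=> a b c d ab ac ad bc bd cd nab ncd.
  have [eac|nac] := boolP (e a c); last first.
    by apply: (step3 a c b d) => //; rewrite eq_sym.
  have [ead|nad] := boolP (e a d); last first.
    by apply: (step3 a d b c) => //; rewrite ?(sym d c) // eq_sym.
  have [ebc|nbc] := boolP (e b c); last first.
    by apply: (step3 b c a d) => //; rewrite ?(sym b a) // eq_sym.
  have [ebd|nbd] := boolP (e b d); last first.
    by apply: (step3 b d a c) => //; rewrite ?(sym b a) ?(sym d c) // eq_sym.
  apply: (negP (H a b c)).
  rewrite /good ab ac bc /okp (negbTE nab) eac ebc /=.
  apply/andP; split; apply/existsP; exists d;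
    by rewrite (eq_sym d a) (eq_sym d c) (eq_sym d b) ad cd bd ?ead ?ebd (negbTE ncd).
have noncl : forall K : {set T}, #|T| - 2 < #|K| -> exists x y,
    [/\ x \in K, y \in K, x != y & ~~ e x y].
  move=> K hK; apply: nonclique; apply: contraTN hK => /clique_le hc.
  by rewrite -leqNgt (leq_trans hc hw).
have avoid : forall v b, v != b -> exists2 c, c != v & (
    (exists d, [/\ d != v, c != d, ~~ e c d, c != b & d != b]) \/
    [/\ c != b & ~~ e b c]).
  move=> v b vb.
  have hK : #|T| - 2 < #|[set~ v]|.
    by rewrite cardsC1; lia.
  have [c [d [cK dK cd ncd]]] := noncl _ hK.
  rewrite !in_setC1 in cK dK.
  have [/eqP cb|cb] := boolP (c == b).
    by exists d => //; right; rewrite -cb eq_sym; split.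
  have [/eqP db|db] := boolP (d == b).
    by exists c => //; right; rewrite -db; split=> //; rewrite sym.
  by exists c => //; left; exists d.
have hK : #|T| - 2 < #|[set: T]| by rewrite cardsT; lia.
have [a [b [_ _ ab nab]]] := noncl _ hK.
have [c ca [[d [da cd ncd cb db]]|[cb nbc]]] := avoid a b ab.
  by apply: (step2 a b c d) => //; rewrite eq_sym.
have [c' cb' [[d' [db' cd' ncd' ca' da']]|[ca' nac']]] := avoid b a (ltac:(by rewrite eq_sym)).
  by apply: (step2 a b c' d') => //; rewrite eq_sym.
have [/eqP cc|cc] := boolP (c == c').
  apply: (negP (H a b c)).
  rewrite /good ab (eq_sym a c) ca (eq_sym b c) cb /okp (negbTE nab) /=.
  by rewrite cc (negbTE nac') -cc (negbTE nbc).
by apply: (step2 b c a c') => //; rewrite eq_sym.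
Qed.


Lemma card3 (x y z : T) : x != y -> x != z -> y != z -> #|~: [set x; y; z]| = #|T| - 3.
Proof.
move=> xy xz yz; have := @cardsC T [set x; y; z].
rewrite [in #|[set x; y; z]|]setUC cardsU1 cards2 !inE negb_or xy (eq_sym z x) (eq_sym z y) xz yz /=; lia.
Qed.

Lemma res2 (a b : T) : simple_graph e -> ~~ e a b -> local_resolving e (~: [set a; b]).
Proof.
move=> [sym irr] nab; apply/forallP=> u; apply/forallP=> v; apply/implyP=> /and3P[].
rewrite !inE !negbK => /orP[]/eqP-> /orP[]/eqP->; rewrite ?irr ?(negbTE nab) //.
by rewrite sym (negbTE nab).
Qed.

End S.

Theorem corollary3p2 (T : finType) (e : rel T) :
  simple_graph e -> connected_graph e ->
  (omega e == #|T| - 1) || (omega e == #|T| - 2) || (omega e == #|T| - 3) ->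
  (4 <= (omega e).+1 <= #|T|) ->
  ((local_metric_dim e)%:R <=
     (((omega e)%:R - 2) / ((omega e)%:R - 1)) * (#|T|)%:R :> rat)%R.
Proof.
move=> sg conn hw /andP[h4 hn].
have hT : 1 < #|T| by lia.
suff [D [hD hA]] : exists D, local_metric_dim e <= D /\
    D * (omega e - 1) <= #|T| * (omega e - 2).
  have w1 : (0 < (omega e)%:R - 1 :> rat)%R.
    by rewrite subr_gt0 (_ : 1 = 1%:R)%R // ltr_nat; lia.
  rewrite mulrC mulrA ler_pdivlMr //.
  have -> : ((omega e)%:R - 1 = (omega e - 1)%:R :> rat)%R by rewrite natrB //; lia.
  have -> : ((omega e)%:R - 2 = (omega e - 2)%:R :> rat)%R by rewrite natrB //; lia.
  rewrite -!natrM ler_nat; apply: leq_trans hA.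
  by rewrite leq_mul2r hD orbT.
have gcase : omega e <= #|T| - 2 -> #|T| <= omega e + 3 -> exists D,
    local_metric_dim e <= D /\ D * (omega e - 1) <= #|T| * (omega e - 2).
  move=> h1 h2; have [x [y [z g]]] := @exists_good T e sg conn hT h1.
  have g' := g; case/andP: g' => xy /and5P[xz yz _ _ _].
  exists (#|T| - 3); split.
    rewrite -(@card3 T x y z xy xz yz); apply: (@dim_le T e).
    by apply: (@good_res T e x y z sg hT g).
  have [k hk] : exists k, omega e = k + 3 by exists (omega e - 3); lia.
  have [j [hj hj3]] : exists j, #|T| = k + 3 + j /\ j <= 3.
    by exists (#|T| - (k + 3)); lia.
  rewrite hk hj.
  have -> : k + 3 + j - 3 = k + j by lia.
  have -> : k + 3 - 1 = k + 2 by lia.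
  have -> : k + 3 - 2 = k + 1 by lia.
  nia.
case/orP: hw => [/orP[]|] /eqP hw.
- have hK : omega e < #|[set: T]| by rewrite cardsT; lia.
  have [a [b [_ _ ab nab]]] : exists x y, [/\ x \in [set: T], y \in [set: T], x != y & ~~ e x y].
    apply: nonclique; apply: contraTN hK => /clique_le hc; by rewrite -leqNgt.
  exists (#|T| - 2); split.
    apply: leq_trans (@dim_le T e _ (@res2 T e a b sg nab)) _.
    have := @cardsC T [set a; b]; rewrite cards2 ab; lia.
  have [k hk] : exists k, omega e = k + 3 by exists (omega e - 3); lia.
  rewrite hk; have -> : #|T| = k + 4 by lia.
  have -> : k + 4 - 2 = k + 2 by lia.
  have -> : k + 3 - 1 = k + 2 by lia.
  have -> : k + 3 - 2 = k + 1 by lia.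
  nia.
- by apply: gcase; lia.
- by apply: gcase; lia.
Qed.
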